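(* For every $2+1$-complex $K\subset\mathbb{R}^3$, the set $Extr(K)$ of extremal points of $K$ is finite.
   Context: A horizontal segment is one contained in a plane $\{z=c\}$; a vertical segment is one parallel to the $z$ axis. A $2+1$-complex is a closed subset of $\mathbb{R}^3$ that is the union of a finite list $L$ of elements, each of one of the following kinds: points; relatively open horizontal segments whose two endpoints belong to $L$; relatively open vertical segments whose two endpoints belong to $L$; relatively open triangles in a horizontal plane whose three boundary segments belong to $L$; relatively open rectangles in a vertical plane, two of whose sides are parallel to the $z$ axis, whose four boundary segments belong to $L$; open subsets of $\mathbb{R}^3$ whose boundary is a union of elements of the previous kinds, all belonging to $L$. A point $p\in K$ is extremal if no relatively open horizontal or vertical segment contained in $K$ contains $p$. *)

(* Defs.v *)
From Stdlib Require Import Reals List.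
Open Scope R_scope.

Definition pt : Type := (R * R * R)%type.
Definition px (p : pt) : R := fst (fst p).
Definition py (p : pt) : R := snd (fst p).
Definition pz (p : pt) : R := snd p.
Definition mkpt (x y z : R) : pt := (x, y, z).

Definition pset := pt -> Prop.
Definition seteq (S T : pset) : Prop := forall x, S x <-> T x.
Definition single (p : pt) : pset := fun x => x = p.

Definition dist2 (p q : pt) : R :=
  (px p - px q)^2 + (py p - py q)^2 + (pz p - pz q)^2.
Definition is_open (S : pset) : Prop :=
  forall p, S p -> exists e, 0 < e /\ forall q, dist2 p q < e * e -> S q.
Definition closure (S : pset) : pset :=
  fun p => forall e, 0 < e -> exists q, S q /\ dist2 p q < e * e.
Definition is_closed (S : pset) : Prop := forall p, closure S p -> S p.
Definition boundary (S : pset) : pset :=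
  fun p => closure S p /\ closure (fun q => ~ S q) p.

Definition open_seg (a b : pt) : pset := fun p =>
  exists t, 0 < t < 1 /\
    p = mkpt ((1 - t) * px a + t * px b) ((1 - t) * py a + t * py b)
             ((1 - t) * pz a + t * pz b).

Definition open_tri (a b c : pt) : pset := fun p =>
  exists l m n, 0 < l /\ 0 < m /\ 0 < n /\ l + m + n = 1 /\
    p = mkpt (l * px a + m * px b + n * px c) (l * py a + m * py b + n * py c)
             (l * pz a + m * pz b + n * pz c).

Definition open_rect (a b : pt) (h : R) : pset := fun p =>
  exists s t, 0 < s < 1 /\ 0 < t < h /\
    p = mkpt ((1 - s) * px a + s * px b) ((1 - s) * py a + s * py b)
             ((1 - s) * pz a + s * pz b + t).

Definition lift (a : pt) (h : R) : pt := mkpt (px a) (py a) (pz a + h).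

Definition horizontal (a b : pt) : Prop := pz a = pz b.
Definition vertical (a b : pt) : Prop := px a = px b /\ py a = py b.

Definition inL (L : list pset) (S : pset) : Prop :=
  exists T, In T L /\ seteq T S.

Definition kind_point (S : pset) : Prop := exists p, seteq S (single p).

Definition kind_hseg (L : list pset) (S : pset) : Prop :=
  exists a b, a <> b /\ horizontal a b /\ seteq S (open_seg a b) /\
    inL L (single a) /\ inL L (single b).

Definition kind_vseg (L : list pset) (S : pset) : Prop :=
  exists a b, a <> b /\ vertical a b /\ seteq S (open_seg a b) /\
    inL L (single a) /\ inL L (single b).

Definition noncollinear_h (a b c : pt) : Prop :=
  (px b - px a) * (py c - py a) - (py b - py a) * (px c - px a) <> 0.

Definition kind_tri (L : list pset) (S : pset) : Prop :=
  exists a b c, pz a = pz b /\ pz b = pz c /\ noncollinear_h a b c /\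
    seteq S (open_tri a b c) /\
    inL L (open_seg a b) /\ inL L (open_seg b c) /\ inL L (open_seg c a).

Definition kind_rect (L : list pset) (S : pset) : Prop :=
  exists a b h, a <> b /\ horizontal a b /\ 0 < h /\
    seteq S (open_rect a b h) /\
    inL L (open_seg a b) /\ inL L (open_seg (lift a h) (lift b h)) /\
    inL L (open_seg a (lift a h)) /\ inL L (open_seg b (lift b h)).

Definition lower_kind (L : list pset) (S : pset) : Prop :=
  kind_point S \/ kind_hseg L S \/ kind_vseg L S \/ kind_tri L S \/ kind_rect L S.

Definition kind_open (L : list pset) (S : pset) : Prop :=
  is_open S /\
  exists Ls : list pset,
    (forall T, In T Ls -> inL L T /\ lower_kind L T) /\
    seteq (boundary S) (fun x => exists T, In T Ls /\ T x).

Definition kind (L : list pset) (S : pset) : Prop :=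
  lower_kind L S \/ kind_open L S.

Definition complex21 (K : pset) : Prop :=
  is_closed K /\
  exists L : list pset,
    (forall S, In S L -> kind L S) /\
    seteq K (fun x => exists S, In S L /\ S x).

Definition extremal (K : pset) (p : pt) : Prop :=
  K p /\
  ~ (exists a b, a <> b /\ (horizontal a b \/ vertical a b) /\
       (forall x, open_seg a b x -> K x) /\ open_seg a b p).

Definition Extr (K : pset) : pset := extremal K.

Definition finite_set (S : pset) : Prop :=
  exists l : list pt, forall p, S p -> In p l.

(* Main.v *)
Require Import Defs.
From Stdlib Require Import Reals List Lra Psatz Classical.
Open Scope R_scope.

Lemma points_list (L : list pset) :
  exists l : list pt, forall S, In S L -> forall p, kind_point S -> S p -> In p l.
Proof.
  induction L as [|a L IH].
  - exists nil; intros S [].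
  - destruct IH as [l Hl].
    destruct (classic (kind_point a)) as [[q Hq]|Hn].
    + exists (q :: l). intros S [<-|HS] p Hk Sp.
      * left. apply Hq in Sp. unfold single in Sp. congruence.
      * right. eapply Hl; eauto.
    + exists l. intros S [<-|HS] p Hk Sp.
      * contradiction.
      * eapply Hl; eauto.
Qed.

Lemma not_extr (K : pset) (p : pt) (dx dy dz d : R) :
  0 < d ->
  (dz = 0 /\ (dx <> 0 \/ dy <> 0)) \/ (dx = 0 /\ dy = 0 /\ dz <> 0) ->
  (forall s, -d < s < d -> K (mkpt (px p + s*dx) (py p + s*dy) (pz p + s*dz))) ->
  ~ extremal K p.
Proof.
  intros Hd Hdir HK [Kp H]. apply H.
  exists (mkpt (px p - d/2*dx) (py p - d/2*dy) (pz p - d/2*dz)),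
         (mkpt (px p + d/2*dx) (py p + d/2*dy) (pz p + d/2*dz)).
  split; [|split; [|split]].
  - intro E. injection E. intros E3 E2 E1.
    assert (dx = 0) by nra. assert (dy = 0) by nra. assert (dz = 0) by nra.
    destruct Hdir as [[_ [?|?]]|[_ [_ ?]]]; contradiction.
  - destruct Hdir as [[Hz _]|[Hx [Hy _]]].
    + left. unfold horizontal, pz, mkpt; simpl. rewrite Hz. ring.
    + right. unfold vertical, px, py, mkpt; simpl. rewrite Hx, Hy. split; ring.
  - intros x [t [Ht ->]].
    replace (mkpt _ _ _) with
      (mkpt (px p + ((t - 1/2)*d)*dx) (py p + ((t - 1/2)*d)*dy) (pz p + ((t - 1/2)*d)*dz)).
    + apply HK. nra.
    + unfold mkpt, px, py, pz; simpl. f_equal; [f_equal|]; field.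
  - exists (1/2). split; [lra|].
    destruct p as [[x y] z]. unfold mkpt, px, py, pz; simpl. f_equal; [f_equal|]; field.
Qed.

Theorem lemma2p3 : forall K : pset, complex21 K -> finite_set (Extr K).
Proof.
  intros K [_ [L [HL HK]]].
  destruct (points_list L) as [l Hl].
  exists l. intros p Ep.
  pose proof Ep as [Kp Hne].
  destruct (proj1 (HK p) Kp) as [S [InS Sp]].
  assert (SK : forall x, S x -> K x) by (intros x Sx; apply HK; eauto).
  destruct (HL S InS) as [[Hk|[Hk|[Hk|[Hk|Hk]]]]|Hk].
  - eapply Hl; eauto.
  - exfalso. destruct Hk as [a [b [Hab [Hh [Hs _]]]]].
    apply Hne. exists a, b. split; [auto|split; [left; auto|split]].
    + intros x Hx. apply SK, Hs, Hx.
    + apply Hs, Sp.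
  - exfalso. destruct Hk as [a [b [Hab [Hh [Hs _]]]]].
    apply Hne. exists a, b. split; [auto|split; [right; auto|split]].
    + intros x Hx. apply SK, Hs, Hx.
    + apply Hs, Sp.
  - exfalso. destruct Hk as [a [b [c [Hab [Hbc [Hnc [Hs _]]]]]]].
    destruct (proj1 (Hs p) Sp) as [l0 [m0 [n0 [Hl0 [Hm0 [Hn0 [Hsum Hp]]]]]]].
    apply (not_extr K p (px b - px a) (py b - py a) (pz b - pz a) (Rmin l0 m0)) in Ep; auto.
    + apply Rmin_glb_lt; auto.
    + left. split; [lra|].
      destruct (classic (px b - px a = 0)) as [E1|E1]; [|left; auto].
      destruct (classic (py b - py a = 0)) as [E2|E2]; [|right; auto].
      exfalso. apply Hnc. rewrite E1, E2. ring.
    + intros s Hs'. apply SK, Hs.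
      pose proof (Rmin_l l0 m0). pose proof (Rmin_r l0 m0).
      exists (l0 - s), (m0 + s), n0. split; [lra|split; [lra|split; [lra|split; [lra|]]]].
      rewrite Hp. unfold mkpt, px, py, pz; simpl. f_equal; [f_equal|]; ring.
  - exfalso. destruct Hk as [a [b [h [Hab [Hh [Hh0 [Hs _]]]]]]].
    destruct (proj1 (Hs p) Sp) as [s0 [t0 [Hs0 [Ht0 Hp]]]].
    apply (not_extr K p 0 0 1 (Rmin t0 (h - t0))) in Ep; auto.
    + apply Rmin_glb_lt; lra.
    + intros s Hs'. apply SK, Hs.
      pose proof (Rmin_l t0 (h - t0)). pose proof (Rmin_r t0 (h - t0)).
      exists s0, (t0 + s). split; [lra|split; [lra|]].
      rewrite Hp. unfold mkpt, px, py, pz; simpl. f_equal; [f_equal|]; ring.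
  - exfalso. destruct Hk as [Ho _].
    destruct (Ho p Sp) as [e [He Hball]].
    apply (not_extr K p 1 0 0 e) in Ep; auto.
    + intros s Hs'. apply SK, Hball.
      unfold dist2, mkpt, px, py, pz; simpl. nra.
Qed.
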